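(* Let $n\ge1$ and let $F:\mathbb{F}_{2^n}\to\mathbb{F}_{2^n}$ be any function. Then $$2^n\sum_{v_1,v_2\in \mathbb{F}_{2^n}}\ \sum_{\substack{(x_1,x_2,x_3)\in \mathbb{F}_{2^n}^3\\ v_1x_1+v_2x_2+(v_1+v_2)x_3=0}} (-1)^{tr_n(v_1F(x_1)+v_2F(x_2)+(v_1+v_2)F(x_3))}\;-\;\sum_{v_1,v_2\in \mathbb{F}_{2^n}}W_F(0,v_1)W_F(0,v_2)W_F(0,v_1+v_2)$$ $$+\;2^{n+2}\sum_{v\in \mathbb{F}_{2^n}^*}W_F^2(0,v)\;-\;2^{4n+2}\;+\;2^{3n+2}\;\ge\;0,$$ and equality holds if and only if $F$ is an o-polynomial.
   Context: For a positive integer $n$, $tr_n:\mathbb{F}_{2^n}\to\mathbb{F}_2$ denotes the absolute trace $tr_n(x)=x+x^2+\cdots+x^{2^{n-1}}$, and $\mathbb{F}_{2^n}^*=\mathbb{F}_{2^n}\setminus\{0\}$. For $F:\mathbb{F}_{2^n}\to\mathbb{F}_{2^n}$ and $(u,v)\in\mathbb{F}_{2^n}^2$, the Walsh transform is $W_F(u,v)=\sum_{x\in\mathbb{F}_{2^n}}(-1)^{tr_n(vF(x))+tr_n(ux)}$. In the projective plane $PG(2,2^n)$, a hyperoval is a set of $2^n+2$ points no three of which lie on a common line. A function (polynomial) $F$ over $\mathbb{F}_{2^n}$ is an o-polynomial if $\{(1,t,F(t)) : t\in\mathbb{F}_{2^n}\}\cup\{(0,1,0),(0,0,1)\}$ is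 a hyperoval of $PG(2,2^n)$. Equivalently (known fact), for every $a\in\mathbb{F}_{2^n}$ and $b\in\mathbb{F}_{2^n}^*$ the equation $F(x)+bx=a$ has $0$ or $2$ solutions in $\mathbb{F}_{2^n}$. *)

(* Defs.v *)
From HB Require Import structures.
From mathcomp Require Import all_boot all_order all_algebra all_field.
Set Implicit Arguments. Unset Strict Implicit. Unset Printing Implicit Defensive.
Import GRing.Theory Num.Theory.
Local Open Scope ring_scope.

Section Defs.
Variable K : finFieldType.

Definition tr (n : nat) (x : K) : K := \sum_(i < n) x ^+ (2 ^ i)%N.

(* (-1)^b for b in F_2 (embedded in K as 0 or 1) *)
Definition sgn (b : K) : int := if b == 0 then 1 else -1.

Definition walsh (n : nat) (F : K -> K) (u v : K) : int :=
  \sum_(x : K) sgn (tr n (v * F x) + tr n (u * x)).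

(* Projective plane PG(2,K): points are represented by nonzero vectors of K^3,
   two representatives denote the same point iff they are proportional.
   A line is given by a nonzero vector a : it is the set of points p with a.p = 0. *)
Definition vec3 := (K * K * K)%type.
Definition dot3 (a p : vec3) : K := a.1.1 * p.1.1 + a.1.2 * p.1.2 + a.2 * p.2.
Definition scale3 (c : K) (p : vec3) : vec3 := (c * p.1.1, c * p.1.2, c * p.2).
Definition same_point (p q : vec3) : Prop := exists c : K, c != 0 /\ p = scale3 c q.
Definition on_common_line (p q r : vec3) : Prop :=
  exists a : vec3, a != (0, 0, 0) /\ dot3 a p = 0 /\ dot3 a q = 0 /\ dot3 a r = 0.

(* A hyperoval of PG(2,2^n), given as a list of its points (one representative
   each): 2^n+2 distinct points, no three of which lie on a common line. *)
Definition is_hyperoval (n : nat) (S : seq vec3) : Prop :=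
  [/\ size S = (2 ^ n + 2)%N,
      (forall i, (i < size S)%N -> nth (0,0,0) S i != (0, 0, 0)),
      (forall i j, (i < size S)%N -> (j < size S)%N -> i <> j ->
          ~ same_point (nth (0,0,0) S i) (nth (0,0,0) S j)) &
      (forall i j k, (i < size S)%N -> (j < size S)%N -> (k < size S)%N ->
          i <> j -> j <> k -> i <> k ->
          ~ on_common_line (nth (0,0,0) S i) (nth (0,0,0) S j) (nth (0,0,0) S k))].

Definition opoly_points (F : K -> K) : seq vec3 :=
  [seq (1, t, F t) | t <- enum K] ++ [:: (0, 1, 0); (0, 0, 1)].

Definition is_opolynomial (n : nat) (F : K -> K) : Prop :=
  is_hyperoval n (opoly_points F).

Definition main_expr (n : nat) (F : K -> K) : int :=
  (2 ^ n)%:Z * (\sum_(v1 : K) \sum_(v2 : K)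
      \sum_(x1 : K) \sum_(x2 : K) \sum_(x3 : K |
             v1 * x1 + v2 * x2 + (v1 + v2) * x3 == 0)
          sgn (tr n (v1 * F x1 + v2 * F x2 + (v1 + v2) * F x3)))
  - (\sum_(v1 : K) \sum_(v2 : K)
        walsh n F 0 v1 * walsh n F 0 v2 * walsh n F 0 (v1 + v2))
  + (2 ^ (n + 2))%:Z * (\sum_(v : K | v != 0) walsh n F 0 v ^+ 2)
  - (2 ^ (4 * n + 2))%:Z + (2 ^ (3 * n + 2))%:Z.

End Defs.

(* Main.v *)
Require Import Defs.
From HB Require Import structures.
From mathcomp Require Import all_boot all_order all_algebra all_field.
From mathcomp Require Import ring zify lra.
Set Implicit Arguments. Unset Strict Implicit. Unset Printing Implicit Defensive.
Import GRing.Theory Num.Theory.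
Local Open Scope ring_scope.

Section Tr.
Variables (n : nat) (K : finFieldType).
Hypothesis hn : (1 <= n)%N.
Hypothesis hK : #|K| = (2 ^ n)%N.

Lemma char2 : 2%N \in [pchar K].
Proof. by apply: (card_finPcharP hK). Qed.

Lemma add_self (x : K) : x + x = 0.
Proof. exact: (addrr_pchar2 char2). Qed.

Lemma addeq0 (x y : K) : (x + y == 0) = (x == y).
Proof. by rewrite addr_eq0 (oppr_pchar2 char2). Qed.

Lemma sqrD (x y : K) : (x + y) ^+ 2 = x ^+ 2 + y ^+ 2.
Proof. by rewrite sqrrD mulr2n add_self addr0. Qed.

Lemma frobD i (x y : K) : (x + y) ^+ (2 ^ i) = x ^+ (2 ^ i) + y ^+ (2 ^ i).
Proof.
elim: i => [|i IH]; first by rewrite !expr1.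
by rewrite expnSr !exprM IH sqrD.
Qed.

Lemma trD (x y : K) : tr n (x + y) = tr n x + tr n y.
Proof. by rewrite /tr -big_split; apply: eq_bigr => i _; rewrite frobD. Qed.

Lemma tr0 : tr n (0 : K) = 0.
Proof. by rewrite /tr big1 // => i _; rewrite expr0n expn_eq0. Qed.

Lemma sqr_sum (I : Type) (r : seq I) (f : I -> K) :
  (\sum_(i <- r) f i) ^+ 2 = \sum_(i <- r) f i ^+ 2.
Proof.
by apply: (big_morph (fun x : K => x ^+ 2) sqrD); rewrite expr0n.
Qed.

Lemma tr_sqr (x : K) : tr n x ^+ 2 = tr n x.
Proof.
rewrite /tr sqr_sum.
have -> : \sum_(i < n) (x ^+ (2 ^ i)) ^+ 2 = \sum_(i < n) x ^+ (2 ^ i.+1).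
  by apply: eq_bigr => i _; rewrite -exprM expnSr.
have hx : x ^+ (2 ^ n) = x by rewrite -hK expf_card.
move: hx; case: n hn => [//|m _] hx.
rewrite big_ord_recr big_ord_recl /= hx expn0 expr1 addrC.
by congr (_ + _); apply: eq_bigr => i _.
Qed.

Lemma tr01 (x : K) : tr n x = 0 \/ tr n x = 1.
Proof.
have h := tr_sqr x.
have : tr n x * (tr n x - 1) = 0 by rewrite mulrBr mulr1 -expr2 h subrr.
move/eqP; rewrite mulf_eq0 subr_eq0 => /orP[] /eqP; tauto.
Qed.

Definition e (x : K) : int := sgn (tr n x).

Lemma eD (x y : K) : e (x + y) = e x * e y.
Proof.
rewrite /e /sgn trD.
have h10 : (1 : K) != 0 by exact: oner_neq0.
case: (tr01 x) => ->; case: (tr01 y) => ->;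
  rewrite ?addr0 ?add0r ?eqxx ?add_self ?(negPf h10) ?eqxx //.
Qed.

Lemma e0 : e 0 = 1.
Proof. by rewrite /e tr0 /sgn eqxx. Qed.

Lemma tr_nonzero : exists a : K, tr n a != 0.
Proof.
apply/existsP; apply: contraT; rewrite negb_exists => /forallP H.
pose p : {poly K} := \sum_(i < n) 'X^(2 ^ i).
have hp : forall x, p.[x] = tr n x.
  move=> x; rewrite /p horner_sum /tr; apply: eq_bigr => i _; by rewrite hornerXn.
have p1 : p`_1 = 1.
  rewrite /p coef_sum; case: n hn => [//|m _].
  rewrite big_ord_recl /= coefXn eqxx big1 ?addr0 // => i _.
  by rewrite coefXn /bump /= expnS; case: (2 ^ i)%N => [|k]; rewrite ?muln0 //= ?mulnS.
have pn0 : p != 0 by apply/eqP => p0; move: p1; rewrite p0 coef0 => /eqP; rewrite eq_sym oner_eq0.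
have hr : all (root p) (enum K).
  by apply/allP => x _; rewrite /root hp; by move: (H x); rewrite negbK.
have := max_poly_roots pn0 hr (enum_uniq K).
rewrite -cardT hK.
have : (size p <= (2 ^ n.-1).+1)%N.
  apply: leq_trans (size_sum _ _ _) _.
  apply/bigmax_leqP => i _; rewrite size_polyXn ltnS leq_pexp2l //.
  by rewrite -ltnS prednK.
case: n hn => [//|m _] /= hs hlt.
have := leq_trans hlt hs; rewrite expnS ltnS.
by case: (2 ^ m)%N (expn_gt0 2 m) => [//|k _]; rewrite mul2n -addnn ltnNge leq_addl.
Qed.

Lemma sum_const1 : \sum_(v : K) (1 : int) = (#|K|)%:Z.
Proof. by rewrite sumr_const -natz. Qed.

Lemma sum_e (y : K) : \sum_(v : K) e (v * y) = if y == 0 then (#|K|)%:Z else 0.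
Proof.
case: eqP => [->|/eqP y0].
  under eq_bigr do rewrite mulr0 e0.
  exact: sum_const1.
have -> : \sum_(v : K) e (v * y) = \sum_(v : K) e v.
  by rewrite [RHS](reindex_inj (mulIf y0)).
have [a ha] := tr_nonzero.
set S := \sum_(v : K) e v.
have hS : S = - S.
  rewrite {1}/S (reindex_inj (addrI a)) /=.
  under eq_bigr do rewrite eD.
  by rewrite -big_distrr /= {1}/e /sgn (negPf ha) mulN1r.
move: hS; clearbody S; lia.
Qed.
End Tr.
Definition ind (b : bool) : int := if b then 1 else 0.

Section Sums.
Variables (K : finFieldType).

Lemma push2 (f : K -> K -> K -> int) :
  \sum_u \sum_a \sum_b f u a b = \sum_a \sum_b \sum_u f u a b.
Proof. rewrite exchange_big; apply: eq_bigr => a _; exact: exchange_big. Qed.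

Lemma push3 (f : K -> K -> K -> K -> int) :
  \sum_u \sum_a \sum_b \sum_c f u a b c = \sum_a \sum_b \sum_c \sum_u f u a b c.
Proof. rewrite exchange_big; apply: eq_bigr => a _; exact: push2. Qed.

Lemma push4 (f : K -> K -> K -> K -> K -> int) :
  \sum_u \sum_a \sum_b \sum_c \sum_d f u a b c d =
  \sum_a \sum_b \sum_c \sum_d \sum_u f u a b c d.
Proof. rewrite exchange_big; apply: eq_bigr => a _; exact: push3. Qed.

Lemma push5 (f : K -> K -> K -> K -> K -> K -> int) :
  \sum_u \sum_a \sum_b \sum_c \sum_d \sum_g f u a b c d g =
  \sum_a \sum_b \sum_c \sum_d \sum_g \sum_u f u a b c d g.
Proof. rewrite exchange_big; apply: eq_bigr => a _; exact: push4. Qed.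

End Sums.

Section Main.
Variables (n : nat) (K : finFieldType).
Hypothesis hn : (1 <= n)%N.
Hypothesis hK : #|K| = (2 ^ n)%N.
Variable F : K -> K.

Local Notation e := (e n).
Local Notation Q := ((#|K|)%:Z).

Lemma eM (a b c : K) : e (a + b) * e c = e (a + b + c).
Proof. by rewrite !(eD hn hK). Qed.

Lemma L3 (H : K -> K) :
  \sum_(v1 : K) \sum_(v2 : K) \sum_(x1 : K) \sum_(x2 : K) \sum_(x3 : K)
     e (v1 * H x1 + v2 * H x2 + (v1 + v2) * H x3)
  = Q ^+ 2 * \sum_(x1 : K) \sum_(x2 : K) \sum_(x3 : K)
        ind ((H x1 == H x3) && (H x2 == H x3)).
Proof.
under eq_bigr => v1 _ do rewrite push3.
rewrite push3 big_distrr; apply: eq_bigr => x1 _.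
rewrite big_distrr; apply: eq_bigr => x2 _.
rewrite big_distrr; apply: eq_bigr => x3 _.
have -> : \sum_(v1 : K) \sum_(v2 : K) e (v1 * H x1 + v2 * H x2 + (v1 + v2) * H x3)
   = \sum_(v1 : K) \sum_(v2 : K) (e (v1 * (H x1 + H x3)) * e (v2 * (H x2 + H x3))).
  apply: eq_bigr => v1 _; apply: eq_bigr => v2 _.
  rewrite -(eD hn hK); congr e; ring.
rewrite -big_distrlr /= !(sum_e hn hK) !(addeq0 hK) /ind.
by case: (H x1 == H x3); case: (H x2 == H x3); rewrite ?mulr0 ?mul0r ?mulr1 ?expr2.
Qed.


Definition G (u x : K) := F x + u * x.

Definition C (u : K) : int := \sum_(x1 : K) \sum_(x2 : K) \sum_(x3 : K)
        ind ((G u x1 == G u x3) && (G u x2 == G u x3)).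

Definition S1 : int := \sum_(v1 : K) \sum_(v2 : K)
      \sum_(x1 : K) \sum_(x2 : K) \sum_(x3 : K |
             v1 * x1 + v2 * x2 + (v1 + v2) * x3 == 0)
          sgn (tr n (v1 * F x1 + v2 * F x2 + (v1 + v2) * F x3)).

Lemma S1E : Q * S1 = Q ^+ 2 * \sum_(u : K) C u.
Proof.
have step : Q * S1 = \sum_(v1 : K) \sum_(v2 : K) \sum_(x1 : K) \sum_(x2 : K) \sum_(x3 : K)
   \sum_(u : K) e (v1 * G u x1 + v2 * G u x2 + (v1 + v2) * G u x3).
  rewrite /S1 big_distrr; apply: eq_bigr => v1 _.
  rewrite big_distrr; apply: eq_bigr => v2 _.
  rewrite big_distrr; apply: eq_bigr => x1 _.
  rewrite big_distrr; apply: eq_bigr => x2 _.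
  rewrite big_mkcond big_distrr; apply: eq_bigr => x3 _ /=.
  set L := v1 * x1 + v2 * x2 + (v1 + v2) * x3.
  set M := v1 * F x1 + v2 * F x2 + (v1 + v2) * F x3.
  have -> : \sum_(u : K) e (v1 * G u x1 + v2 * G u x2 + (v1 + v2) * G u x3)
       = \sum_(u : K) e (u * L) * e M.
    apply: eq_bigr => u _; rewrite -(eD hn hK); congr e; rewrite /G /L /M; ring.
  rewrite -big_distrl /= (sum_e hn hK).
  by case: (L == 0); rewrite ?mulr0 ?mul0r.
rewrite step.
rewrite -(push5 (fun u v1 v2 x1 x2 x3 =>
   e (v1 * G u x1 + v2 * G u x2 + (v1 + v2) * G u x3))) big_distrr /=.
by apply: eq_bigr => u _; rewrite L3.
Qed.

Lemma walshE v : walsh n F 0 v = \sum_(x : K) e (v * F x).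
Proof. by apply: eq_bigr => x _; rewrite mul0r tr0 addr0. Qed.

Lemma C0 : C 0 = \sum_(x1 : K) \sum_(x2 : K) \sum_(x3 : K)
        ind ((F x1 == F x3) && (F x2 == F x3)).
Proof. by rewrite /C /G; under eq_bigr do under eq_bigr do under eq_bigr do rewrite !mul0r !addr0. Qed.

Lemma S2E : \sum_(v1 : K) \sum_(v2 : K)
        walsh n F 0 v1 * walsh n F 0 v2 * walsh n F 0 (v1 + v2) = Q ^+ 2 * C 0.
Proof.
rewrite C0 -L3; apply: eq_bigr => v1 _; apply: eq_bigr => v2 _.
rewrite !walshE big_distrlr big_distrl /=; apply: eq_bigr => x1 _.
rewrite big_distrl /=; apply: eq_bigr => x2 _.
rewrite big_distrr /=; apply: eq_bigr => x3 _.
by rewrite -!(eD hn hK).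
Qed.

Definition B : int := \sum_(x : K) \sum_(y : K) ind (F x == F y).

Lemma TE : \sum_(v : K | v != 0) walsh n F 0 v ^+ 2 = Q * B - Q ^+ 2.
Proof.
have hall : \sum_(v : K) walsh n F 0 v ^+ 2 = Q * B.
  have -> : \sum_(v : K) walsh n F 0 v ^+ 2 =
     \sum_(v : K) \sum_(x : K) \sum_(y : K) e (v * (F x + F y)).
    apply: eq_bigr => v _; rewrite walshE expr2 big_distrlr /=.
    by apply: eq_bigr => x _; apply: eq_bigr => y _; rewrite -(eD hn hK) mulrDr.
  rewrite push2 /B big_distrr; apply: eq_bigr => x _.
  rewrite big_distrr; apply: eq_bigr => y _.
  rewrite (sum_e hn hK) (addeq0 hK) /ind; case: (F x == F y) => /=; rewrite ?mulr1 ?mulr0 //.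
rewrite (bigD1 0) //= walshE in hall.
have h0 : \sum_(x : K) e (0 * F x) = Q.
  under eq_bigr do rewrite mul0r e0.
  exact: sum_const1.
rewrite h0 in hall; rewrite -hall; ring.
Qed.


Lemma indA a b : ind (a && b) = ind a * ind b.
Proof. by case: a; case: b; rewrite /ind ?mulr1 ?mulr0. Qed.

Lemma sum_ind_eq (a : K) (c : K -> int) : \sum_(x : K) ind (x == a) * c x = c a.
Proof.
rewrite (bigD1 a) //= eqxx mul1r big1 ?addr0 // => x /negPf ->; by rewrite mul0r.
Qed.

Lemma sum_ind_eq' (a : K) (c : K -> int) : \sum_(x : K) ind (a == x) * c x = c a.
Proof. by under eq_bigr do rewrite eq_sym; exact: sum_ind_eq. Qed.

Lemma sum_ind1 (a : K) : \sum_(x : K) ind (x == a) = 1.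
Proof.
have := sum_ind_eq a (fun _ => 1); under eq_bigr do rewrite mulr1; by [].
Qed.

Lemma sum_constK (c : int) : \sum_(x : K) c = Q * c.
Proof. by rewrite sumr_const -mulr_natl natz. Qed.

Lemma decomp (g : K -> K) (x1 x2 x3 : K) :
  ind ((g x1 == g x3) && (g x2 == g x3)) =
  ind ((x1 != x2) && (x2 != x3) && (x1 != x3) && (g x1 == g x3) && (g x2 == g x3))
  + ind (x1 == x3) * ind (x2 == x3)
  + ind (x1 == x3) * ind ((x2 != x3) && (g x2 == g x3))
  + ind (x2 == x3) * ind ((x1 != x3) && (g x1 == g x3))
  + ind (x1 == x2) * ind ((x1 != x3) && (g x1 == g x3)).
Proof.
case: (eqVneq x1 x3) => [->|h13]; case: (eqVneq x2 x3) => [->|h23];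
  rewrite ?eqxx /= ?h13 ?h23 ?(negPf h13) ?(negPf h23) /ind /=.
- by [].
- by case: (g x2 == g x3).
- by rewrite andbT; case: (g x1 == g x3).
- case: (eqVneq x1 x2) => [->|h12]; rewrite ?eqxx ?(negPf h12) /=;
  by case: (g _ == g x3); case: (g _ == g x3).
Qed.


Definition Du (u : K) : int := \sum_(x1 : K) \sum_(x2 : K) \sum_(x3 : K)
  ind ((x1 != x2) && (x2 != x3) && (x1 != x3) && (G u x1 == G u x3) && (G u x2 == G u x3)).

Definition Pu (u : K) : int := \sum_(x : K) \sum_(y : K) ind ((x != y) && (G u x == G u y)).

Lemma Cdecomp u : C u = Du u + Q + 3%:Z * Pu u.
Proof.
rewrite /C.
under eq_bigr do under eq_bigr do under eq_bigr do rewrite (decomp (G u)).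
under eq_bigr do under eq_bigr do rewrite !big_split.
under eq_bigr do rewrite !big_split.
rewrite !big_split /=.
have hA : \sum_(x1 : K) \sum_(x2 : K) \sum_(x3 : K) ind (x1 == x3) * ind (x2 == x3) = Q.
  under eq_bigr do under eq_bigr do rewrite sum_ind_eq'.
  under eq_bigr do rewrite sum_ind1.
  exact: sum_const1.
have hB : \sum_(x1 : K) \sum_(x2 : K) \sum_(x3 : K)
     ind (x1 == x3) * ind ((x2 != x3) && (G u x2 == G u x3)) = Pu u.
  rewrite push2; apply: eq_bigr => x2 _; apply: eq_bigr => x3 _.
  exact: sum_ind_eq.
have hC : \sum_(x1 : K) \sum_(x2 : K) \sum_(x3 : K)
     ind (x2 == x3) * ind ((x1 != x3) && (G u x1 == G u x3)) = Pu u.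
  apply: eq_bigr => x1 _; rewrite exchange_big; apply: eq_bigr => x3 _.
  exact: sum_ind_eq.
have hD : \sum_(x1 : K) \sum_(x2 : K) \sum_(x3 : K)
     ind (x1 == x2) * ind ((x1 != x3) && (G u x1 == G u x3)) = Pu u.
  apply: eq_bigr => x1 _.
  under eq_bigr do rewrite -big_distrr.
  exact: (sum_ind_eq' x1 (fun _ => \sum_(x3 : K) ind ((x1 != x3) && (G u x1 == G u x3)))).
rewrite hA hB hC hD /Du; ring.
Qed.


Lemma pair_u (x y : K) :
  \sum_(u | u != 0) ind ((x != y) && (G u x == G u y)) = ind ((x != y) && (F x != F y)).
Proof.
case: (eqVneq x y) => [->|hxy] /=.
  by rewrite big1 // => u _; rewrite /ind.
have hxy' : x - y != 0 by rewrite subr_eq0.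
set u0 := (F y - F x) / (x - y).
have hG : forall u, (G u x == G u y) = (u == u0).
  move=> u; rewrite /G /u0; apply/eqP/eqP => h.
    apply: (mulIf hxy'); rewrite mulfVK //.
    apply/eqP; rewrite -subr_eq0; apply/eqP.
    transitivity ((F x + u * x) - (F y + u * y)); first ring.
    by rewrite h subrr.
  rewrite h; field; exact: hxy'.
under eq_bigr do rewrite hG.
rewrite big_mkcond /=.
have -> : \sum_(u : K) (if u != 0 then ind (u == u0) else 0)
    = \sum_(u : K) ind (u == u0) * ind (u0 != 0).
  apply: eq_bigr => u _; case: (eqVneq u u0) => [->|h]; rewrite /ind ?mul0r //=.
  by case: (u0 != 0); rewrite ?mulr1 ?mulr0.
  by case: (u != 0).
rewrite sum_ind_eq /u0 mulf_eq0 negb_or invr_eq0 hxy' andbT subr_eq0 eq_sym.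
by [].
Qed.


Definition D : int := \sum_(u | u != 0) Du u.
Definition E : int := \sum_(x : K) \sum_(y : K) ind ((x != y) && (F x == F y)).
Definition Rr : int := \sum_(x : K) \sum_(y : K) ind ((x != y) && (F x != F y)).

Lemma sumPu : \sum_(u | u != 0) Pu u = Rr.
Proof.
rewrite /Pu exchange_big; apply: eq_bigr => x _.
rewrite exchange_big; apply: eq_bigr => y _; exact: pair_u.
Qed.

Lemma sum_ind_neq (x : K) : \sum_(y : K) ind (x != y) = Q - 1.
Proof.
have -> : \sum_(y : K) ind (x != y) = \sum_(y : K) (1 - ind (x == y)).
  by apply: eq_bigr => y _; rewrite /ind; case: (x == y).
rewrite sumrB sum_const1; congr (_ - _).
by have := sum_ind_eq' x (fun _ => 1); under eq_bigr do rewrite mulr1.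
Qed.

Lemma RE : Rr + E = Q ^+ 2 - Q.
Proof.
rewrite /Rr /E -big_split /=.
have -> : \sum_(x : K) (\sum_(y : K) ind ((x != y) && (F x != F y)) +
      \sum_(y : K) ind ((x != y) && (F x == F y))) = \sum_(x : K) (Q - 1).
  apply: eq_bigr => x _; rewrite -big_split /= -(sum_ind_neq x); apply: eq_bigr => y _.
  by rewrite /ind; case: (x != y); case: (F x == F y).
by rewrite sum_constK; ring.
Qed.

Lemma BE : B = Q + E.
Proof.
rewrite /B /E -(sum_const1 K).
rewrite -big_split /=. apply: eq_bigr => x _.
rewrite -(sum_ind_eq' x (fun _ => 1)) -big_split /=; apply: eq_bigr => y _.
case: (eqVneq x y) => [->|h]; rewrite /ind ?eqxx ?(negPf h) /=; first by case: (F y == F y).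
by case: (F x == F y).
Qed.

Lemma sumQ : \sum_(u : K | u != 0) Q = Q ^+ 2 - Q.
Proof.
have := sum_constK Q; rewrite (bigD1 0) //= => h.
by rewrite expr2 -h; ring.
Qed.

Lemma sumC : \sum_(u | u != 0) C u = D + (Q ^+ 2 - Q) + 3%:Z * Rr.
Proof.
under eq_bigr do rewrite Cdecomp.
by rewrite !big_split /= -big_distrr /= sumPu sumQ.
Qed.


Lemma powE k : ((2 ^ (k * n + 2))%N)%:Z = 4 * Q ^+ k.
Proof.
rewrite hK expnD (mulnC k n) expnM mulnC PoszM; congr (_ * _).
by rewrite -!natz natrX.
Qed.

Lemma mainE : main_expr n F = Q ^+ 2 * (D + E).
Proof.
rewrite /main_expr -/S1.
have h4 := powE 4; have h3 := powE 3; have h1 := powE 1.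
rewrite mul1n in h1.
rewrite h4 h3 h1 -hK S1E S2E TE.
rewrite (bigD1 0) //= sumC.
have hB := BE; have hR := RE.
rewrite hB.
have -> : Rr = Q ^+ 2 - Q - E by rewrite -hR; ring.
ring.
Qed.


Lemma ind_ge0 b : 0 <= ind b.
Proof. by rewrite /ind; case: b. Qed.

Lemma ind_eq0 b : ind b = 0 -> b = false.
Proof. by rewrite /ind; case: b. Qed.

Lemma D_ge0 : 0 <= D.
Proof.
apply: sumr_ge0 => u _; apply: sumr_ge0 => x1 _; apply: sumr_ge0 => x2 _;
  apply: sumr_ge0 => x3 _; exact: ind_ge0.
Qed.

Lemma E_ge0 : 0 <= E.
Proof. apply: sumr_ge0 => x _; apply: sumr_ge0 => y _; exact: ind_ge0. Qed.

Definition Inj := forall x y : K, x != y -> F x != F y.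
Definition NoTri := forall u x1 x2 x3 : K, u != 0 -> x1 != x2 -> x2 != x3 -> x1 != x3 ->
   G u x1 = G u x3 -> G u x2 = G u x3 -> False.

Lemma DE0 : D + E = 0 <-> Inj /\ NoTri.
Proof.
have hD := D_ge0; have hE := E_ge0.
split.
  move=> h0.
  have D0 : D = 0 by lia.
  have E0 : E = 0 by lia.
  split.
    move=> x y hxy; apply/negP => /eqP hF.
    have h1 := psumr_eq0P (fun x _ => sumr_ge0 _ (fun y _ => ind_ge0 _)) E0 (i := x) isT.
    have h2 := psumr_eq0P (fun y _ => ind_ge0 _) h1 (i := y) isT.
    by move: (ind_eq0 h2); rewrite hxy hF eqxx.
  move=> u x1 x2 x3 hu h12 h23 h13 e1 e2.
  have g3 : forall x : K, (fun x => 0 <= \sum_(x2 : K) \sum_(x3 : K) ind ((x != x2) && (x2 != x3) && (x != x3) && (G u x == G u x3) && (G u x2 == G u x3))) x.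
    move=> x; apply: sumr_ge0 => ? _; apply: sumr_ge0 => ? _; exact: ind_ge0.
  have gD : forall v : K, v != 0 -> 0 <= Du v.
    move=> v _; apply: sumr_ge0 => ? _; apply: sumr_ge0 => ? _; apply: sumr_ge0 => ? _; exact: ind_ge0.
  have h1 := psumr_eq0P gD D0 hu; rewrite /Du in h1.
  have h2 := psumr_eq0P (fun x _ => g3 x) h1 (i := x1) isT.
  have h3 := psumr_eq0P (fun y _ => sumr_ge0 _ (fun z _ => ind_ge0 _)) h2 (i := x2) isT.
  have h4 := psumr_eq0P (fun z _ => ind_ge0 _) h3 (i := x3) isT.
  by move: (ind_eq0 h4); rewrite h12 h23 h13 e1 e2 eqxx.
case=> hI hN.
have -> : D = 0.
  apply: big1 => u hu; apply: big1 => x1 _; apply: big1 => x2 _; apply: big1 => x3 _.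
  rewrite /ind; case: ifP => // /andP[] /andP[] /andP[] /andP[] h12 h23 h13 /eqP e1 /eqP e2.
  by case: (hN u x1 x2 x3 hu h12 h23 h13 e1 e2).
have -> : E = 0.
  apply: big1 => x _; apply: big1 => y _.
  rewrite /ind; case: ifP => // /andP[] hxy /eqP hF.
  by move: (hI x y hxy); rewrite hF eqxx.
by rewrite addr0.
Qed.

End Main.
Section Geo.
Variables (n : nat) (K : finFieldType).
Hypothesis hK : #|K| = (2 ^ n)%N.
Variable F : K -> K.

Local Notation pt i := (nth (0,0,0) (opoly_points F) i).
Definition tt (i : nat) : K := nth 0 (enum K) i.

Lemma size_enumK : size (enum K) = #|K|.
Proof. by rewrite -cardT. Qed.

Lemma pt_aff i : (i < #|K|)%N -> pt i = (1, tt i, F (tt i)).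
Proof.
move=> hi; rewrite /opoly_points nth_cat size_map size_enumK hi.
by rewrite (nth_map 0) // size_enumK.
Qed.

Lemma pt_q : pt #|K| = (0, 1, 0).
Proof. by rewrite /opoly_points nth_cat size_map size_enumK ltnn subnn. Qed.

Lemma pt_q1 : pt #|K|.+1 = (0, 0, 1).
Proof. by rewrite /opoly_points nth_cat size_map size_enumK ltnNge leqnSn /= subSnn. Qed.

Lemma tt_inj i j : (i < #|K|)%N -> (j < #|K|)%N -> tt i = tt j -> i = j.
Proof.
move=> hi hj h; apply/eqP; rewrite -(nth_uniq 0 _ _ (enum_uniq K)) ?size_enumK //.
by apply/eqP.
Qed.

Lemma idx_tt (x : K) : exists2 i, (i < #|K|)%N & tt i = x.
Proof.
exists (index x (enum K)); first by rewrite -size_enumK index_mem mem_enum.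
by rewrite /tt nth_index // mem_enum.
Qed.


Lemma size_pts : size (opoly_points F) = (#|K| + 2)%N.
Proof. by rewrite size_cat size_map size_enumK. Qed.

Lemma opoly_to : is_opolynomial n F -> Inj F /\ NoTri F.
Proof.
case=> _ _ _ H4.
split.
- move=> x y hxy; apply/negP => /eqP hF.
  have [i hi ti] := idx_tt x; have [j hj tj] := idx_tt y.
  have hij : i <> j by move=> eij; move: hxy; rewrite -ti -tj eij eqxx.
  apply: (H4 i j #|K|); rewrite ?size_pts; try lia.
  exists (F x, 0, -1); rewrite (pt_aff hi) (pt_aff hj) pt_q ti tj hF /dot3 /=.
  split; first by apply/negP => /eqP [] _ /eqP; rewrite oppr_eq0 oner_eq0.
  by split; [ring | split; ring].
- move=> u x1 x2 x3 hu h12 h23 h13 e1 e2.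
  have [i1 hi1 t1] := idx_tt x1; have [i2 hi2 t2] := idx_tt x2; have [i3 hi3 t3] := idx_tt x3.
  have d : forall i j (x y : K), tt i = x -> tt j = y -> x != y -> i <> j.
    by move=> i j x y <- <- hxy eij; move: hxy; rewrite eij eqxx.
  apply: (H4 i1 i2 i3); rewrite ?size_pts; try lia.
  + exact: (d _ _ _ _ t1 t2 h12).
  + exact: (d _ _ _ _ t2 t3 h23).
  + exact: (d _ _ _ _ t1 t3 h13).
  exists (- G F u x3, u, 1); rewrite (pt_aff hi1) (pt_aff hi2) (pt_aff hi3) t1 t2 t3 /dot3 /=.
  split; first by apply/negP => /eqP [] _ _ /eqP; rewrite oner_eq0.
  move: e1 e2; rewrite /G => e1 e2.
  split; first by rewrite -e1; ring.
  split; first by rewrite -e2; ring.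
  ring.
Qed.


Lemma idx3 i : (i < #|K| + 2)%N -> (i < #|K|)%N \/ i = #|K| \/ i = #|K|.+1.
Proof. lia. Qed.

Lemma one0 : (1 : K) = 0 -> False.
Proof. by move/eqP; rewrite oner_eq0. Qed.

Lemma lin_solve (a b c : K) : b != 0 -> a + b * c = 0 -> c = - a / b.
Proof.
move=> hb h; have -> : c = (a + b * c - a) / b by field.
by rewrite h sub0r.
Qed.

Lemma zclass (a1 a2 a3 : K) x : (x < #|K| + 2)%N -> dot3 (a1, a2, a3) (pt x) = 0 ->
  ((x < #|K|)%N /\ a1 + a2 * tt x + a3 * F (tt x) = 0) \/ (x = #|K| /\ a2 = 0)
  \/ (x = #|K|.+1 /\ a3 = 0).
Proof.
move=> hx; case: (idx3 hx) => [hx'|[->|->]].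
- by rewrite (pt_aff hx') /dot3 /= mulr1 => h; left.
- by rewrite pt_q /dot3 /= !mulr0 mulr1 add0r addr0 => h; right; left.
- by rewrite pt_q1 /dot3 /= !mulr0 mulr1 !add0r => h; right; right.
Qed.

Lemma pig (P1 P2 : nat -> Prop) i j k :
  (forall x y, P1 x -> P1 y -> x = y) -> (forall x y, P2 x -> P2 y -> x = y) ->
  (P1 i \/ P2 i) -> (P1 j \/ P2 j) -> (P1 k \/ P2 k) -> i <> j -> j <> k -> i <> k -> False.
Proof.
move=> u1 u2 [hi|hi] [hj|hj] [hk|hk] hij hjk hik.
all: first [ exact: hij (u1 _ _ hi hj) | exact: hij (u2 _ _ hi hj)
           | exact: hjk (u1 _ _ hj hk) | exact: hjk (u2 _ _ hj hk)
           | exact: hik (u1 _ _ hi hk) | exact: hik (u2 _ _ hi hk) ].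
Qed.

Lemma opoly_from : Inj F -> NoTri F -> is_opolynomial n F.
Proof.
move=> hI hN; split.
- by rewrite size_pts hK.
- move=> i; rewrite size_pts => hi; case: (idx3 hi) => [hi'|[->|->]];
    rewrite ?(pt_aff hi') ?pt_q ?pt_q1; apply/negP => /eqP [];
    by [move/one0 | move=> _ /one0 | move=> _ _ /one0].
- move=> i j; rewrite size_pts => hi hj hij [c [hc0 heq]].
  case: (idx3 hi) => [hi'|[ei|ei]]; case: (idx3 hj) => [hj'|[ej|ej]];
    move: heq; rewrite ?(pt_aff hi') ?(pt_aff hj') ?ei ?ej ?pt_q ?pt_q1 /scale3 /=;
    case; rewrite ?mulr0 ?mulr1; try lia.
  + move=> <- h2 _; apply: hij; apply: tt_inj => //; by rewrite h2 mul1r.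
  + by move=> /one0.
  + by move=> /one0.
  + by move=> e0; move: hc0; rewrite -e0 eqxx.
  + by move=> _ /one0.
  + by move=> e0; move: hc0; rewrite -e0 eqxx.
  + by move=> _ _ /one0.
- move=> i j k; rewrite size_pts => hi hj hk hij hjk hik [[[a1 a2] a3] [ha0 [di [dj dk]]]].
  have zi := zclass hi di; have zj := zclass hj dj; have zk := zclass hk dk.
  have tinj : forall x y, (x < #|K|)%N -> (y < #|K|)%N -> x <> y -> tt x != tt y.
    by move=> x y hx hy hxy; apply/eqP => h; exact: hxy (tt_inj hx hy h).
  case: (eqVneq a3 0) => [e3|h3]; case: (eqVneq a2 0) => [e2|h2].
  + subst a3 a2.
    have h1 : a1 != 0 by apply: contraNneq ha0 => ->.
    have cl : forall x, ((x < #|K|)%N /\ a1 + 0 * tt x + 0 * F (tt x) = 0)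
        \/ (x = #|K| /\ (0:K) = 0) \/ (x = #|K|.+1 /\ (0:K) = 0) ->
        x = #|K| \/ x = #|K|.+1.
      move=> x [[_ h]|[[-> _]|[-> _]]]; [ | by left | by right].
      by move: h1; rewrite -h !mul0r !addr0 eqxx.
    apply: (pig (P1 := fun x => x = #|K|) (P2 := fun x => x = #|K|.+1)) hij hjk hik;
      try (by move=> x y -> ->); exact: cl.
  + subst a3.
    have cl : forall x, ((x < #|K|)%N /\ a1 + a2 * tt x + 0 * F (tt x) = 0)
        \/ (x = #|K| /\ a2 = 0) \/ (x = #|K|.+1 /\ (0:K) = 0) ->
        x = #|K|.+1 \/ ((x < #|K|)%N /\ tt x = - a1 / a2).
      move=> x [[hx h]|[[-> h]|[-> _]]]; [ | by move: h2; rewrite h eqxx | by left].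
      by right; split => //; apply: lin_solve => //; move: h; rewrite mul0r addr0.
    apply: (pig (P1 := fun x => x = #|K|.+1)
                (P2 := fun x => (x < #|K|)%N /\ tt x = - a1 / a2)) hij hjk hik;
      try (by move=> x y -> ->); try exact: cl.
    by move=> x y [hx ex] [hy ey]; apply: tt_inj => //; rewrite ex ey.
  + subst a2.
    have cl : forall x, ((x < #|K|)%N /\ a1 + 0 * tt x + a3 * F (tt x) = 0)
        \/ (x = #|K| /\ (0:K) = 0) \/ (x = #|K|.+1 /\ a3 = 0) ->
        x = #|K| \/ ((x < #|K|)%N /\ F (tt x) = - a1 / a3).
      move=> x [[hx h]|[[-> _]|[-> h]]]; [ | by left | by move: h3; rewrite h eqxx].
      by right; split => //; apply: lin_solve => //; move: h; rewrite mul0r addr0.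
    apply: (pig (P1 := fun x => x = #|K|)
                (P2 := fun x => (x < #|K|)%N /\ F (tt x) = - a1 / a3)) hij hjk hik;
      try (by move=> x y -> ->); try exact: cl.
    move=> x y [hx ex] [hy ey]; have [//|hne] := eqVneq x y.
    by move: (hI _ _ (tinj x y hx hy (elimN eqP hne))); rewrite ex ey eqxx.
  + have cl : forall x, ((x < #|K|)%N /\ a1 + a2 * tt x + a3 * F (tt x) = 0)
        \/ (x = #|K| /\ a2 = 0) \/ (x = #|K|.+1 /\ a3 = 0) ->
        (x < #|K|)%N /\ G F (a2 / a3) (tt x) = - a1 / a3.
      move=> x [[hx h]|[[-> h]|[-> h]]]; [ | by move: h2; rewrite h eqxx | by move: h3; rewrite h eqxx].
      split => //; rewrite /G (lin_solve h3 h); field; exact: h3.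
    have [hi' gi] := cl _ zi; have [hj' gj] := cl _ zj; have [hk' gk] := cl _ zk.
    apply: (hN (a2 / a3) (tt i) (tt j) (tt k)).
    * by rewrite mulf_neq0 // invr_neq0.
    * exact: tinj.
    * exact: tinj.
    * exact: tinj.
    * by rewrite gi gk.
    * by rewrite gj gk.
Qed.

End Geo.

Unset Implicit Arguments.
Set Strict Implicit.

Theorem mainTheorem2 (n : nat) (K : finFieldType) (hn : (1 <= n)%N)
    (hK : #|K| = (2 ^ n)%N) (F : K -> K) :
  0 <= main_expr n F /\ (main_expr n F = 0 <-> is_opolynomial n F).
Proof.
have hE := mainE hn hK F.
have hq : ((#|K|)%:Z == 0) = false.
  by apply/negbTE; rewrite hK -lt0n expn_gt0.
split.
  rewrite hE; apply: mulr_ge0; first exact: sqr_ge0.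
  by rewrite addr_ge0 // ?D_ge0 ?E_ge0.
rewrite hE; split.
  move/eqP; rewrite mulf_eq0 expf_eq0 hq andbF /= => /eqP h.
  have [hI hN] := (DE0 hn hK F).1 h.
  exact: (opoly_from hK hI hN).
move/(opoly_to hK) => [hI hN].
by rewrite ((DE0 hn hK F).2 (conj hI hN)) mulr0.
Qed.
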